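(* Let $G=([n],E)$ be an undirected graph with pathwidth $s=\mathrm{pw}(G)\ge 1$. Then there exist a function $c:[n]\to[s]$ and a permutation $u\in\Pi([n])$ such that for every $i\in[n]$ at least one of the following holds: (1) for every neighbour $k$ of $i$ in $G$, $u(i)\le u(k)$; (2) for all $j,k\in[n]$ such that $c(j)=c(i)$, $u(i)<u(j)$ and $k$ is a neighbour of $j$ in $G$, we have $u(i)\le u(k)$.
   Context: $[n]=\{1,\dots,n\}$. $\Pi([n])$ is the set of permutations of $[n]$ written as words $(u_1,\dots,u_n)$ in which each element occurs once; $u(i)$ denotes the position of $i$ in $u$. A path decomposition of an undirected graph $G=(V,E)$ is a sequence $X_1,\dots,X_p$ of subsets of $V$ such that every vertex lies in some $X_a$, every edge has both endpoints in some common $X_a$, and if $v\in X_a\cap X_b$ with $a<b$ then $v\in X_c$ for all $c\in[a,b]$. Its size is $\max_a|X_a|-1$, and the pathwidth $\mathrm{pw}(G)$ is the minimum size of a path decomposition of $G$. *)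

(* Defs.v *)
From mathcomp Require Import all_boot all_fingroup.
Set Implicit Arguments. Unset Strict Implicit. Unset Printing Implicit Defensive.

Definition simple_graph (n : nat) (e : rel 'I_n) : Prop :=
  symmetric e /\ irreflexive e.

(* Xs = X_1,...,X_p (0-indexed here) is a path decomposition of the graph e. *)
Definition path_decomposition (n : nat) (e : rel 'I_n) (Xs : seq {set 'I_n}) : Prop :=
  (forall v : 'I_n, has (fun X : {set 'I_n} => v \in X) Xs) /\
  (forall v w : 'I_n, e v w -> has (fun X : {set 'I_n} => (v \in X) && (w \in X)) Xs) /\
  (forall (v : 'I_n) (a b c : nat), a <= c -> c <= b -> b < size Xs ->
     v \in nth set0 Xs a -> v \in nth set0 Xs b -> v \in nth set0 Xs c).

Definition pd_size (n : nat) (Xs : seq {set 'I_n}) : nat :=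
  (\max_(X <- Xs) #|X|).-1.

Definition pathwidth_is (n : nat) (e : rel 'I_n) (s : nat) : Prop :=
  (exists Xs, path_decomposition e Xs /\ pd_size Xs = s) /\
  (forall Xs, path_decomposition e Xs -> s <= pd_size Xs).

(* Main.v *)
Require Import Defs.
From mathcomp Require Import all_boot all_fingroup zify.
Set Implicit Arguments. Unset Strict Implicit. Unset Printing Implicit Defensive.

Section R.
Variables (n : nat) (Xs : seq {set 'I_n}).
Definition rr (v : 'I_n) : nat := \max_(a : 'I_(size Xs) | v \in nth set0 Xs a) val a.

Lemma mem_lt v a : v \in nth set0 Xs a -> a < size Xs.
Proof. by case: (ltnP a (size Xs)) => // h; rewrite nth_default // inE. Qed.

Lemma rr_ge v a : v \in nth set0 Xs a -> a <= rr v.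
Proof.
move=> h; have ha := mem_lt h.
exact: (@leq_bigmax_cond _ (fun a : 'I_(size Xs) => v \in nth set0 Xs a) (fun a => val a) (Ordinal ha)).
Qed.

Lemma rr_in v : has (fun X : {set 'I_n} => v \in X) Xs -> v \in nth set0 Xs (rr v).
Proof.
move/(has_nthP set0) => [a ha hv].
have : 0 < #|[pred a : 'I_(size Xs) | v \in nth set0 Xs a]|.
  by apply/card_gt0P; exists (Ordinal ha).
move/(eq_bigmax_cond (fun a : 'I_(size Xs) => val a)) => [b hb eqb].
rewrite /rr; rewrite eqb. exact hb.
Qed.
End R.
Lemma greedy n s (u : 'I_n -> nat) (conf : rel 'I_n) (hs : 0 < s)
  (Hb : forall i, u i < n) (Hinj : injective u)
  (Hc : forall i j, conf i j -> u i < u j)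
  (Hcnt : forall i, #|[set j | conf i j]| < s) :
  exists c : 'I_n -> 'I_s, forall i j, conf i j -> c i != c j.
Proof.
pose P m := exists c : 'I_n -> 'I_s, forall i j, conf i j -> m <= u i -> c i != c j.
have step : forall m, P m.+1 -> P m.
  move=> m [c Hcm].
  case: (pickP (fun x => u x == m)) => [i0 /eqP Hi0 | Hnone]; last first.
    exists c => i j hij hm; apply: Hcm => //.
    have := Hnone i; rewrite /= => /negbT hne.
    rewrite ltn_neqAle hm andbT eq_sym; exact hne.
  pose S := [set c x | x in [set j | conf i0 j]].
  have hS : #|S| < s by apply: leq_ltn_trans (leq_imset_card _ _) (Hcnt i0).
  have [col hcol] : exists col, col \notin S.
    case: (pickP (fun col => col \notin S)) => [col h | h]; first by exists col.
    have : [set: 'I_s] \subset S by apply/subsetP => x _; move: (h x) => /= /negbFE.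
    by move/subset_leq_card; rewrite cardsT card_ord leqNgt hS.
  exists (fun x => if x == i0 then col else c x) => i j hij hm.
  have hu := Hc _ _ hij.
  have hj : (j == i0) = false by apply/eqP => ej; move: hu; rewrite ej Hi0; lia.
  rewrite hj; have [ei | nei] := eqVneq i i0.
    apply/eqP => ec; move: hcol; rewrite ec.
    by rewrite imset_f // inE -ei.
  apply: Hcm => //.
  rewrite ltn_neqAle hm andbT; apply/eqP => em; move/eqP: nei; apply.
  by apply: Hinj; rewrite -em Hi0.
have base : P n by exists (fun _ => Ordinal hs) => i j _ h; have := Hb i; lia.
have all : forall k, k <= n -> P (n - k).
  elim=> [|k IH] hk; first by rewrite subn0.
  apply: step; have -> : (n - k.+1).+1 = n - k by lia.
  by apply: IH; lia.
have [c Hc0] := all n (leqnn n).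
by exists c => i j hij; apply: Hc0 => //; rewrite subnn.
Qed.
Lemma rank_perm n (key : 'I_n -> nat) (hk : injective key) :
  exists u : {perm 'I_n}, forall a b, (u a < u b) = (key a < key b).
Proof.
pose rk v := #|[set w | key w < key v]|.
have rk_lt : forall v, rk v < n.
  move=> v; rewrite -[n]card_ord -cardsT; apply: proper_card.
  apply/properP; split; first by apply/subsetP.
  by exists v; rewrite ?inE // ltnn.
have mono : forall a b, key a < key b -> rk a < rk b.
  move=> a b h; apply: proper_card; apply/properP; split.
    apply/subsetP => x; rewrite !inE => hx; exact: ltn_trans hx h.
  by exists a; rewrite !inE ?h // ltnn.
pose f v := Ordinal (rk_lt v).
have finj : injective f.
  move=> a b /(congr1 val) /= e.
  case: (ltngtP (key a) (key b)) => h.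
  - by have := mono _ _ h; rewrite e ltnn.
  - by have := mono _ _ h; rewrite e ltnn.
  - exact: hk.
exists (perm finj) => a b; rewrite !permE /=.
case: (ltngtP (key a) (key b)) => h.
- by rewrite mono.
- by apply/negbTE; rewrite -leqNgt ltnW // mono.
- by rewrite (hk _ _ h) !ltnn.
Qed.

Lemma t2 (a b c d n: nat) : d < n -> a * n + c <= b * n + d -> a <= b. Proof. nia. Qed.

Theorem mainTheorem13 (n s : nat) (e : rel 'I_n) (hG : simple_graph e)
  (hs : 1 <= s) (hpw : pathwidth_is e s) :
  exists (c : 'I_n -> 'I_s) (u : {perm 'I_n}),
    forall i : 'I_n,
      (forall k : 'I_n, e i k -> u i <= u k) \/
      (forall j k : 'I_n, c j = c i -> u i < u j -> e j k -> u i <= u k).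
Proof.
move: hpw => [[Xs [[Hcov [Hedge Hconv]] Hsz]] _].
pose r := rr Xs.
pose key (v : 'I_n) := r v * n + val v.
have key_inj : injective key.
  move=> a b ek; apply/val_inj.
  move: ek; rewrite /key => ek; have := congr1 (modn^~ n) ek; rewrite /= !modnMDl !modn_small //.
have key_r : forall a b, key a <= key b -> r a <= r b.
  move=> a b; rewrite /key => h; exact: (t2 (ltn_ord b) h).
have [u Hu] := rank_perm key_inj.
have Hle : forall a b, u a <= u b -> r a <= r b.
  by move=> a b; rewrite leqNgt Hu -leqNgt; apply: key_r.
have Hbag : forall a, a < size Xs -> #|nth set0 Xs a| <= s.+1.
  move=> a ha.
  have := @leq_bigmax_seq _ Xs (fun _ => true) (fun X : {set 'I_n} => #|X|) _ (mem_nth set0 ha) erefl.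
  move: Hsz; rewrite /pd_size => Hsz h; apply: (leq_trans h); rewrite -Hsz; exact: leqSpred.
have in_mid : forall v b R, v \in nth set0 Xs b -> b <= R -> R <= r v -> v \in nth set0 Xs R.
  move=> v b R hb h1 h2; have hr := rr_in (Hcov v).
  exact: (Hconv v b (r v) R h1 h2 (mem_lt hr) hb hr).
pose conf (i j : 'I_n) := [&& u i < u j, ~~[forall k, e i k ==> (u i <= u k)]
   & [exists k, e j k && (u k < u i)]].
have Hcnt : forall i, #|[set j | conf i j]| < s.
  move=> i; case: (boolP [forall k, e i k ==> (u i <= u k)]) => H1.
    have -> : [set j | conf i j] = set0.
      by apply/setP => j; rewrite !inE /conf H1 /= andbF.
    by rewrite cards0.
  move/forallPn: H1 => [k0]; rewrite negb_imply -ltnNge => /andP [eik0 hk0].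
  set J := [set j | conf i j].
  pose M := [pred k | (u k < u i) && (e i k || [exists j in J, e j k])].
  have Mk0 : M k0 by rewrite /M /= hk0 eik0.
  have [ks Mks hmax] := arg_maxnP (fun k : 'I_n => (u k : nat)) Mk0.
  have hR : forall k, M k -> r k <= r ks by move=> k Mk; apply: Hle; apply: hmax.
  have hRi : r ks <= r i by apply: Hle; move: Mks => /andP [/ltnW].
  have inR : forall v k, e v k -> M k -> r i <= r v -> v \in nth set0 Xs (r ks).
    move=> v k evk Mk hiv.
    move: (Hedge v k evk) => /(has_nthP set0) [b hb /andP [hvb hkb]].
    apply: (in_mid v b) => //.
      exact: leq_trans (rr_ge hkb) (hR k Mk).
    exact: leq_trans hRi hiv.
  have iR : i \in nth set0 Xs (r ks) by apply: (inR i k0) => //.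
  have JR : forall j, j \in J -> j \in nth set0 Xs (r ks).
    move=> j hj; have := hj; rewrite inE /conf => /and3P [hij _ /existsP [k /andP [ejk hki]]].
    apply: (inR j k ejk).
      rewrite /M /= hki /=; apply/orP; right; apply/existsP; exists j; rewrite hj ejk.
      done.
    by apply: Hle; apply: ltnW.
  have ksR : ks \in nth set0 Xs (r ks) by apply: rr_in.
  have sub : ks |: (i |: J) \subset nth set0 Xs (r ks).
    apply/subsetP => x; rewrite !inE => /orP [/eqP -> // | /orP [/eqP -> // | hx]].
    by apply: JR; rewrite inE.
  have iJ : i \notin J by rewrite inE /conf ltnn.
  have ksJ : ks \notin i |: J.
    rewrite !inE negb_or; move: Mks => /andP [hks _]; apply/andP; split.
      by apply/eqP => ek; move: hks; rewrite ek ltnn.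
    by rewrite /conf negb_and -leqNgt ltnW.
  have := subset_leq_card sub; rewrite cardsU1 ksJ cardsU1 iJ.
  have := Hbag _ (mem_lt ksR); move=> h1 h2; have := leq_trans h2 h1; by rewrite !add1n ltnS.
have [c Hc] := @greedy n s (fun x => val (u x)) conf hs (fun x => ltn_ord (u x))
   (fun a b h => perm_inj (val_inj h))
   (fun i j h => proj1 (andP h)) Hcnt.
exists c, u => i.
case: (boolP [forall k, e i k ==> (u i <= u k)]) => H1.
  by left => k eik; move/forallP: H1 => /(_ k); rewrite eik.
right => j k hc hij ejk; rewrite leqNgt; apply/negP => hki.
have : conf i j by rewrite /conf hij H1 /=; apply/existsP; exists k; rewrite ejk hki.
by move/Hc; rewrite hc eqxx.
Qed.
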